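(* Let $q$ be a prime power and let $n,k,r,x$ be integers with $0\le x\le r\le \min(n,k)$. Let $\mathbf{M}$ be a random $n\times k$ matrix over $\mathbb{F}_q$ whose entries are independent and uniformly distributed on $\mathbb{F}_q$, conditioned on $\mathrm{rank}(\mathbf{M})=r$, and let $X=\{i\in\{1,\dots,k\}:\mathbf{e}_i\in\mathrm{Row}(\mathbf{M})\}$. Then $$P(|X|\ge x\mid R=r,\,N=n)=\frac{1}{\binom{k}{r}_q}\sum_{i=x}^{r}\binom{k}{i}\sum_{j=0}^{k-i}(-1)^j\binom{k-i}{j}\binom{k-i-j}{r-i-j}_q .$$
   Context: $\mathbf{e}_i$ denotes the $i$-th standard unit vector of $\mathbb{F}_q^k$, and $\mathrm{Row}(\mathbf{M})$ is the row space of $\mathbf{M}$. $R$ denotes the rank of $\mathbf{M}$ and $N$ its number of rows. $\binom{m}{d}$ is the ordinary binomial coefficient. $\binom{m}{d}_q$ is the Gaussian binomial coefficient, i.e. the number of $d$-dimensional subspaces of an $m$-dimensional vector space over $\mathbb{F}_q$, $\binom{m}{d}_q=\prod_{i=0}^{d-1}\frac{q^{m}-q^{i}}{q^{d}-q^{i}}$ for $0\le d\le m$. By convention $\binom{m}{d}_q=0$ if $d<0$ or $d>m$. *)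

(* Defs.v *)
From HB Require Import structures.
From mathcomp Require Import all_boot all_order all_algebra.
Set Implicit Arguments. Unset Strict Implicit. Unset Printing Implicit Defensive.
Import Order.TTheory GRing.Theory Num.Theory.

Local Open Scope ring_scope.

Definition gbin (q : nat) (m d : int) : rat :=
  if (0 <= d) && (d <= m) then
    \prod_(i < `|d|%N) (((q%:Q) ^+ `|m|%N - (q%:Q) ^+ i) / ((q%:Q) ^+ `|d|%N - (q%:Q) ^+ i))
  else 0.

Definition unit_rows_in (F : fieldType) (n k : nat) (M : 'M[F]_(n, k)) : {set 'I_k} :=
  [set i : 'I_k | ((delta_mx (0 : 'I_1) i : 'rV[F]_k) <= M)%MS].

(* Main.v *)
Require Import Defs.
From HB Require Import structures.
From mathcomp Require Import all_boot all_order all_algebra.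
Import Order.TTheory GRing.Theory Num.Theory.
Set Implicit Arguments. Unset Strict Implicit. Unset Printing Implicit Defensive.
Local Open Scope ring_scope.

Lemma sub_colL (F : fieldType) s t d (B : 'M[F]_(s,d)) (A : 'M[F]_(t,d)) : (B <= col_mx B A)%MS.
Proof. by have := submx_refl (col_mx B A); rewrite col_mx_sub => /andP[]. Qed.
Lemma sub_colR (F : fieldType) s t d (B : 'M[F]_(s,d)) (A : 'M[F]_(t,d)) : (A <= col_mx B A)%MS.
Proof. by have := submx_refl (col_mx B A); rewrite col_mx_sub => /andP[]. Qed.

Lemma rank_addv (F : fieldType) m d (W : 'M[F]_(m,d)) (v : 'rV[F]_d) :
  \rank (W + v)%MS = (\rank W + ~~ (v <= W)%MS)%N.
Proof.
case: (boolP (v <= W)%MS) => hv /=.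
  rewrite addn0; apply/eqmx_rank/andP; split; first by rewrite addsmx_sub submx_refl.
  exact: addsmxSl.
have h1 := mxrank_adds_leqif W v.
have h2 := rank_leq_row v.
have h3 : (\rank W < \rank (W + v)%MS)%N.
  by rewrite (ltn_leqif (mxrank_leqif_sup (addsmxSl W v))) addsmx_sub submx_refl.
apply/eqP; rewrite eqn_leq addn1 h3 andbT.
apply: leq_trans h1.1 _; by rewrite -[X in (_ <= X)%N]addn1 leq_add2l.
Qed.

Lemma rf_step (F : fieldType) s t d (B : 'M[F]_(s,d)) (A : 'M[F]_(t,d)) (v : 'rV[F]_d) :
  row_free (col_mx B (col_mx v A) : 'M_(s + (1 + t), d)) =
  row_free (col_mx B A) && ~~ (v <= col_mx B A)%MS.
Proof.
rewrite /row_free.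
have -> : \rank (col_mx B (col_mx v A)) = \rank (col_mx B A + v)%MS.
  apply/eqmx_rank/andP; split.
    rewrite !col_mx_sub; do ![apply/andP; split].
    - exact: submx_trans (sub_colL B A) (addsmxSl _ _).
    - exact: addsmxSr.
    - exact: submx_trans (sub_colR B A) (addsmxSl _ _).
  rewrite addsmx_sub !col_mx_sub; do ![apply/andP; split].
  - exact: sub_colL.
  - exact: submx_trans (sub_colR v A) (sub_colR _ _).
  - exact: submx_trans (sub_colL v A) (sub_colR _ _).
rewrite rank_addv.
have := rank_leq_row (col_mx B A).
case: (v <= col_mx B A)%MS => /= h.
  rewrite addn0 andbF; apply/negbTE; rewrite neq_ltn; apply/orP; left.
  by apply: leq_ltn_trans h _; rewrite ltn_add2l add1n ltnSn.
by rewrite andbT addn1 add1n addnS eqSS.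
Qed.

Lemma card_subv (F : finFieldType) m d (V : 'M[F]_(m,d)) :
  #|[set v : 'rV[F]_d | (v <= V)%MS]| = (#|F| ^ \rank V)%N.
Proof.
have -> : [set v : 'rV[F]_d | (v <= V)%MS] =
          [set u *m row_base V | u in [set: 'rV[F]_(\rank V)]].
  apply/setP => v; rewrite inE -(eq_row_base V).
  apply/submxP/imsetP => [[u ->]|[u _ ->]]; by exists u.
rewrite card_imset ?cardsT ?card_mx ?mul1n //.
have [B hB] := row_freeP (row_base_free V).
by apply: (can_inj (g := mulmx^~ B)) => u; rewrite -mulmxA hB mulmx1.
Qed.

Lemma card_subvD (F : finFieldType) m p d (V : 'M[F]_(m,d)) (W : 'M[F]_(p,d)) :
  (W <= V)%MS ->
  #|[set v : 'rV[F]_d | (v <= V)%MS && ~~ (v <= W)%MS]| =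
  (#|F| ^ \rank V - #|F| ^ \rank W)%N.
Proof.
move=> sWV.
have -> : [set v : 'rV[F]_d | (v <= V)%MS && ~~ (v <= W)%MS] =
   [set v : 'rV[F]_d | (v <= V)%MS] :\: [set v : 'rV[F]_d | (v <= W)%MS].
  by apply/setP => v; rewrite !inE andbC.
rewrite cardsD -!card_subv; congr (_ - _)%N; apply: eq_card => v.
rewrite !inE; apply/andP/idP => [[]//|h]; split=> //; exact: submx_trans h sWV.
Qed.

Lemma ext_count (F : finFieldType) d s p (V : 'M[F]_(p,d)) (B : 'M[F]_(s,d)) t :
  row_free B -> (B <= V)%MS ->
  #|[set C : 'M[F]_(t,d) | (C <= V)%MS && row_free (col_mx B C)]| =
  (\prod_(i < t) (#|F| ^ \rank V - #|F| ^ (s + i)))%N.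
Proof.
move=> fB sBV; elim: t => [|t IH].
  rewrite big_ord0 (_ : [set C : 'M[F]_(0,d) | _] = [set 0]) ?cards1 //.
  apply/setP => C; rewrite !inE [C]flatmx0 eqxx sub0mx /= /row_free [X in _ == X]addn0.
  have -> : \rank (col_mx B (0 : 'M_(0,d))) = \rank B.
    by apply/eqmx_rank/andP; rewrite col_mx_sub submx_refl sub0mx sub_colL.
  exact: fB.
rewrite big_ord_recr /= -IH -sum_nat_const -sum1_card -[t.+1]/(1 + t)%N.
set S' := [set C : 'M[F]_(t,d) | _].
rewrite (partition_big dsubmx (mem S')) /= => [|C]; last first.
  rewrite !inE -{1 2}(vsubmxK C) col_mx_sub rf_step => /andP[/andP[_ ->]] /andP[-> _] //.
apply: eq_bigr => A; rewrite inE => /andP[sAV fBA].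
rewrite (reindex (col_mx^~ A)) /=; last first.
  exists usubmx => [v _ | C]; first by rewrite col_mxKu.
  by rewrite inE => /andP[_ /eqP <-]; rewrite vsubmxK.
have sW : (col_mx B A <= V)%MS by rewrite col_mx_sub sBV.
rewrite -(eqP fBA) -card_subvD // sum1_card; apply: eq_card => v.
rewrite unfold_in /= !inE col_mxKd eqxx andbT col_mx_sub rf_step sAV fBA /=.
by case: (v <= V)%MS.
Qed.

Definition subsp (F : finFieldType) k r := [set V : 'M[F]_k | (<<V>>%MS == V) && (\rank V == r)].

Lemma count_contain (F : finFieldType) k r (W : 'M[F]_k) : (\rank W <= r)%N ->
  (#|[set V in subsp F k r | (W <= V)%MS]| *
    \prod_(i < r - \rank W) (#|F| ^ r - #|F| ^ (\rank W + i)))%N =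
  (\prod_(i < r - \rank W) (#|F| ^ k - #|F| ^ (\rank W + i)))%N.
Proof.
move=> hsr; set s := \rank W; set B := row_base W.
have sB1 : (B <= (1%:M : 'M[F]_k))%MS by apply: submx1.
have := ext_count (r - s) (row_base_free W) sB1; rewrite mxrank1 => <-.
rewrite -sum_nat_const -[RHS]sum1_card.
set E := [set C : 'M[F]_(r - s, k) | _].
rewrite [RHS](partition_big (fun C : 'M[F]_(r - s, k) => <<col_mx B C>>%MS)
   (mem [set V in subsp F k r | (W <= V)%MS])) /=; last first.
  move=> C; rewrite !inE genmx_id eqxx mxrank_gen /= => /andP[_ hr].
  apply/andP; split; first by rewrite (eqP hr) subnKC.
  rewrite genmxE -(eq_row_base W); exact: sub_colL.
apply: eq_bigr => V; rewrite !inE => /andP[/andP[gV rV] sWV].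
have sBV : (B <= V)%MS by rewrite eq_row_base.
have := ext_count (r - s) (row_base_free W) sBV; rewrite (eqP rV) => <-.
rewrite sum1_card.
apply: eq_card => C; rewrite [RHS]unfold_in /=.
have -> : (C \in E) = (C <= 1%:M)%MS && row_free (col_mx B C) by rewrite /E inE.
rewrite [LHS]inE; apply/andP/andP => [[sCV fC]|[/andP[_ fC] /eqP gC]]; last first.
  by split => //; rewrite -gC genmxE; exact: sub_colR.
split; first by apply/andP; split => //; apply: submx1.
rewrite -(eqP gV); apply/eqP/genmxP.
have sCV' : (col_mx B C <= V)%MS by rewrite col_mx_sub sBV.
rewrite -(mxrank_leqif_eq sCV').2 (eqP rV) (eqP fC) subnKC //.
Qed.

Definition WU (F : fieldType) k (U : {set 'I_k}) : 'M[F]_k :=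
  (\sum_(i in U) <<(delta_mx 0 i : 'rV[F]_k)>>)%MS.

Lemma WU_sub (F : fieldType) k (U : {set 'I_k}) (V : 'M[F]_k) :
  (WU F U <= V)%MS = (U \subset unit_rows_in V).
Proof.
apply/sumsmx_subP/subsetP => [h i iU | h i iU].
  by rewrite inE -genmxE h.
by rewrite genmxE; have := h i iU; rewrite inE.
Qed.

Lemma rank_WU (F : fieldType) k (U : {set 'I_k}) : \rank (WU F U) = #|U|.
Proof.
have := @mxdirect_delta F _ (mem U) k id (fun _ _ _ _ h => h).
move/mxdirectP => /= ->.
by rewrite -sum1_card; apply: eq_bigr => i _; rewrite mxrank_gen mxrank_delta.
Qed.
Lemma natQ (n : nat) : n%:Q = n%:R. Proof. by []. Qed.

Lemma gbin_ratio q k r u : (1 < q)%N -> (u <= r)%N -> (r <= k)%N ->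
  (\prod_(i < r - u) (q ^ k - q ^ (u + i)))%N%:Q /
  (\prod_(i < r - u) (q ^ r - q ^ (u + i)))%N%:Q = gbin q (k - u)%N%:Z (r%:Z - u%:Z).
Proof.
move=> q1 ur rk; rewrite /gbin subzn // lez_nat leq_sub2r // /= !natQ.
rewrite !natr_prod -prodf_div; apply: eq_bigr => i _.
have hQ : (q%:Q) ^+ u != 0 by rewrite expf_neq0 // pnatr_eq0 -lt0n ltnW.
have ui_r : (u + i < r)%N by rewrite -ltn_subRL ltn_ord.
rewrite !natrB ?leq_exp2l // ?(ltnW ui_r) ?(leq_trans (ltnW ui_r)) //.
have e1 : (q%:R : rat) ^+ r = q%:R ^+ u * q%:R ^+ (r - u) by rewrite -exprD subnKC.
have e2 : (q%:R : rat) ^+ k = q%:R ^+ u * q%:R ^+ (k - u) by rewrite -exprD subnKC // (leq_trans ur rk).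
rewrite !natrX e1 e2 exprD -!mulrBr.
by rewrite -mulf_div divff // mul1r.
Qed.

Lemma NU (F : finFieldType) k r (U : {set 'I_k}) : (r <= k)%N ->
  #|[set V in subsp F k r | U \subset unit_rows_in V]|%:Q =
  gbin #|F| (k - #|U|)%N%:Z (r%:Z - #|U|%:Z).
Proof.
move=> rk; have q1 := card_finNzRing_gt1 F.
case: (leqP #|U| r) => ur.
  have := @count_contain F k r (WU F U); rewrite rank_WU => /(_ ur).
  have -> : [set V in subsp F k r | (WU F U <= V)%MS] =
            [set V in subsp F k r | U \subset unit_rows_in V].
    by apply/setP => V; rewrite !inE WU_sub.
  move=> h; rewrite -gbin_ratio // -h !natQ natrM mulfK //.
  rewrite pnatr_eq0 -lt0n; apply/prodn_gt0 => i.
  rewrite subn_gt0 ltn_exp2l // -ltn_subRL ltn_ord //.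
rewrite /gbin subr_ge0 lez_nat leqNgt ur /=.
apply/eqP; rewrite pnatr_eq0 cards_eq0; apply/eqP/setP => V; rewrite !inE.
apply/negP => /andP[/andP[_ /eqP rV]]; rewrite -WU_sub => /mxrankS.
by rewrite rank_WU rV leqNgt ur.
Qed.

Definition tog (T : finType) (d : T) (U : {set T}) : {set T} :=
  if d \in U then U :\ d else d |: U.

Lemma togK (T : finType) (d : T) : involutive (tog d).
Proof.
move=> U; rewrite /tog; case: (boolP (d \in U)) => h.
  by rewrite setD11 setD1K.
by rewrite setU11 setU1K.
Qed.

Lemma tog_sign (T : finType) (d : T) (U : {set T}) :
  (-1) ^+ #|tog d U| = - ((-1) ^+ #|U|) :> rat.
Proof.
rewrite /tog; case: (boolP (d \in U)) => h.
  by rewrite [in RHS](cardsD1 d U) h exprS mulN1r opprK.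
by rewrite cardsU1 h exprS mulN1r.
Qed.

Lemma toggle_sum (T : finType) (P : pred {set T}) (d : T) :
  (forall U, P (tog d U) = P U) -> \sum_(U | P U) (-1) ^+ #|U| = 0 :> rat.
Proof.
move=> hP; set S := \sum_(U | P U) _.
have hS : S = - S.
  rewrite /S [LHS](reindex_inj (can_inj (togK d))) /=.
  rewrite [LHS](eq_bigl P) => [|U]; last exact: hP.
  by rewrite -sumrN; apply: eq_bigr => U _; rewrite tog_sign.
have : S *+ 2 = 0 by rewrite mulr2n {1}hS addNr.
by move/eqP; rewrite mulrn_eq0 /= => /eqP.
Qed.

Lemma incl_excl (T : finType) (S A : {set T}) : S \subset A ->
  \sum_(U : {set T} | (S \subset U) && (U \subset A)) (-1) ^+ (#|U| - #|S|) = (S == A)%:R :> rat.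
Proof.
move=> SA; case: (eqVneq S A) => [<-|nSA].
  rewrite (eq_bigl (fun U : {set T} => U == S)) ?big_pred1_eq ?subnn //= => U.
  by rewrite eqEsubset andbC.
have [d dA dS] : exists2 d, d \in A & d \notin S.
  apply/exists_inP; move: nSA; apply: contraNT; rewrite negb_exists_in => /forall_inP h.
  by rewrite eqEsubset SA; apply/subsetP => y yA; have := h y yA; rewrite negbK.
have -> : \sum_(U : {set T} | (S \subset U) && (U \subset A)) (-1) ^+ (#|U| - #|S|) =
          (-1) ^+ #|S| * \sum_(U : {set T} | (S \subset U) && (U \subset A)) (-1) ^+ #|U| :> rat.
  rewrite mulr_sumr; apply: eq_bigr => U /andP[SU _].
  have h1 : (-1) ^+ #|S| * (-1) ^+ #|S| = 1 :> rat.
    by rewrite -exprD addnn -mul2n exprM expr2 mulN1r opprK expr1n.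
  by rewrite -{2}(subnK (subset_leq_card SU)) exprD mulrCA h1 mulr1.
rewrite (toggle_sum (d := d)) ?mulr0 // => U.
rewrite /tog; case: (boolP (d \in U)) => h.
  congr andb; apply/idP/idP => H.
  - apply/subsetP => y yS; have := subsetP H y yS; rewrite !inE; by case/andP.
  - apply/subsetP => y yS; rewrite !inE (subsetP H y yS) andbT.
    by apply/eqP => eyd; move: dS; rewrite -eyd yS.
  - apply/subsetP => y yU; case: (eqVneq y d) => [->//|ne].
    by apply: (subsetP H); rewrite !inE ne.
  - by apply/subsetP => y; rewrite !inE => /andP[_ /(subsetP H)].
congr andb; apply/idP/idP => H.
- apply/subsetP => y yS; have := subsetP H y yS; rewrite !inE => /orP[/eqP eyd|//].
  by move: dS; rewrite -eyd yS.
- by apply/subsetP => y yS; rewrite !inE (subsetP H y yS) orbT.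
- by apply/subsetP => y yU; apply: (subsetP H); rewrite !inE yU orbT.
- by apply/subsetP => y; rewrite !inE => /orP[/eqP ->//|/(subsetP H)].
Qed.

Lemma card_sup (T : finType) (S : {set T}) j :
  #|[set U : {set T} | (S \subset U) && (#|U| == #|S| + j)%N]| = 'C(#|T| - #|S|, j).
Proof.
have -> : (#|T| - #|S|)%N = #|~: S| by rewrite -(cardsC S) addKn.
rewrite -cards_draws.
set D := [set U : {set T} | _].
rewrite -(@card_in_imset _ _ (fun U => U :\: S) (mem D)); last first.
  move=> U1 U2; rewrite !inE => /andP[s1 _] /andP[s2 _] e.
  by rewrite -(setID U1 S) -(setID U2 S) (setIidPr s1) (setIidPr s2) e.
apply: eq_card => V; rewrite inE; apply/imsetP/andP.
  case=> U; rewrite inE => /andP[SU /eqP cU] ->; split.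
    by apply/subsetP => y; rewrite !inE => /andP[].
  by rewrite cardsD (setIidPr SU) cU addKn.
case=> VS /eqP cV; exists (V :|: S).
  rewrite inE subsetUr /= cardsU.
  have dVS : [disjoint V & S] by rewrite disjoints_subset.
  by rewrite (disjoint_setI0 dVS) cards0 subn0 cV addnC.
have dVS : [disjoint V & S] by rewrite disjoints_subset.
by rewrite setDUl setDv setU0; apply/esym/setDidPl.
Qed.

Lemma inner_card (T : finType) (S : {set T}) (h : nat -> rat) :
  \sum_(U : {set T} | S \subset U) h #|U| =
  \sum_(0 <= j < (#|T| - #|S|).+1) ('C(#|T| - #|S|, j)%:R * h (#|S| + j)%N).
Proof.
set m := (#|T| - #|S|)%N.
rewrite (partition_big (fun U : {set T} => inord (#|U| - #|S|) : 'I_m.+1) xpredT) //=.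
rewrite big_mkord; apply: eq_bigr => j _.
have eqc : forall U : {set T}, S \subset U ->
    (inord (#|U| - #|S|) == j :> 'I_m.+1) = (#|U| == #|S| + j)%N.
  move=> U SU; have hle := subset_leq_card SU.
  rewrite -val_eqE /= inordK; last by rewrite ltnS leq_sub2r ?max_card.
  apply/eqP/eqP => [<-|->]; [by rewrite subnKC | by rewrite addKn].
rewrite (eq_bigr (fun _ => h (#|S| + j)%N)) => [|U /andP[SU /eqP hj]]; last first.
  by move: (eqc U SU); rewrite hj eqxx => /esym/eqP ->.
rewrite sumr_const -card_sup mulr_natl; congr (_ *+ _).
by apply: eq_card => U; rewrite !inE unfold_in /=; case: (boolP (S \subset U)) => // SU; rewrite eqc.
Qed.

Lemma outer_card (T : finType) (H : nat -> rat) x :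
  \sum_(S : {set T} | (x <= #|S|)%N) H #|S| =
  \sum_(x <= i < #|T|.+1) ('C(#|T|, i)%:R * H i).
Proof.
rewrite (partition_big (fun S : {set T} => inord #|S| : 'I_#|T|.+1) (fun i : 'I_#|T|.+1 => (x <= i)%N)) /=; last first.
  by move=> S hS; rewrite inordK // ltnS max_card.
rewrite big_geq_mkord; apply: eq_bigr => i hi.
have eqc : forall S : {set T}, (inord #|S| == i :> 'I_#|T|.+1) = (#|S| == i).
  by move=> S; rewrite -val_eqE /= inordK // ltnS max_card.
rewrite (eq_bigr (fun _ => H i)) => [|S /andP[_]]; last by rewrite eqc => /eqP ->.
rewrite sumr_const -card_draws mulr_natl; congr (_ *+ _).
apply: eq_card => S; rewrite !inE unfold_in /= eqc.
by case: eqP => [->|]; rewrite ?hi ?andbF.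
Qed.

Lemma inner_eq (T : finType) (A : {set T}) x :
  \sum_(S : {set T} | (x <= #|S|)%N) \sum_(U : {set T} | S \subset U)
     ((U \subset A)%:R * (-1) ^+ (#|U| - #|S|)) = (x <= #|A|)%:R :> rat.
Proof.
transitivity (\sum_(S : {set T} | (x <= #|S|)%N) (S == A)%:R : rat).
  apply: eq_bigr => S _.
  rewrite (eq_bigr (fun U : {set T} => if U \subset A then (-1) ^+ (#|U| - #|S|) else 0))
    => [|U _]; last by case: (U \subset A); rewrite ?mul1r ?mul0r.
  rewrite -big_mkcondr.
  case: (boolP (S \subset A)) => SA; first exact: incl_excl.
  rewrite big_pred0 => [|U]; last first.
    by apply/negP => /andP[SU UA]; rewrite (subset_trans SU UA) in SA.
  by case: eqP => // eSA; rewrite eSA subxx in SA.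
case: (boolP (x <= #|A|)%N) => h.
  rewrite (bigD1 A) //= eqxx big1 ?addr0 // => S /andP[_ /negbTE ->] //.
rewrite big1 // => S hS; case: eqP => // eSA; by rewrite -eSA hS in h.
Qed.

Lemma cnt_sum (F : finFieldType) k r (P : pred 'M[F]_k) :
  #|[set V in subsp F k r | P V]|%:Q = \sum_(V in subsp F k r) (P V)%:R.
Proof.
rewrite -sum1_card natQ natr_sum [LHS]big_mkcond [RHS]big_mkcond /=.
apply: eq_bigr => V _; rewrite [V \in [set _ in _ | _]]inE.
by case: (V \in subsp F k r); case: (P V).
Qed.

Lemma sub_count (F : finFieldType) k r x :
  #|[set V in subsp F k r | (x <= #|unit_rows_in V|)%N]|%:Q =
  \sum_(S : {set 'I_k} | (x <= #|S|)%N) \sum_(U : {set 'I_k} | S \subset U)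
     ((-1) ^+ (#|U| - #|S|) * #|[set V in subsp F k r | U \subset unit_rows_in V]|%:Q).
Proof.
rewrite cnt_sum.
rewrite (eq_bigr (fun V => \sum_(S : {set 'I_k} | (x <= #|S|)%N) \sum_(U : {set 'I_k} | S \subset U)
     ((U \subset unit_rows_in V)%:R * (-1) ^+ (#|U| - #|S|)))) => [|V _]; last by rewrite inner_eq.
rewrite exchange_big; apply: eq_bigr => S _.
rewrite exchange_big; apply: eq_bigr => U _.
rewrite cnt_sum mulr_sumr; apply: eq_bigr => V _; exact: mulrC.
Qed.

Lemma subsp_count (F : finFieldType) k r x : (x <= r)%N -> (r <= k)%N ->
  #|[set V in subsp F k r | (x <= #|unit_rows_in V|)%N]|%:Q =
  \sum_(x <= i < r.+1)
      ('C(k, i)%:Q *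
       \sum_(0 <= j < (k - i).+1)
         ((-1) ^+ j * 'C(k - i, j)%:Q
          * gbin #|F| ((k - i - j)%:Z) (r%:Z - i%:Z - j%:Z))).
Proof.
move=> hxr rk; rewrite sub_count.
set g := fun u : nat => gbin #|F| (k - u)%N%:Z (r%:Z - u%:Z).
rewrite (eq_bigr (fun S : {set 'I_k} => \sum_(U : {set 'I_k} | S \subset U)
    ((-1) ^+ (#|U| - #|S|) * g #|U|))) => [|S _]; last first.
  by apply: eq_bigr => U _; rewrite NU.
rewrite (eq_bigr (fun S : {set 'I_k} =>
    \sum_(0 <= j < (#|'I_k| - #|S|).+1) ('C(#|'I_k| - #|S|, j)%:R *
        ((-1) ^+ (#|S| + j - #|S|) * g (#|S| + j)%N)))) => [|S _]; last first.
  exact: (inner_card S (fun u => (-1) ^+ (u - #|S|) * g u)).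
rewrite (outer_card 'I_k (fun s => \sum_(0 <= j < (#|'I_k| - s).+1) ('C(#|'I_k| - s, j)%:R *
        ((-1) ^+ (s + j - s) * g (s + j)%N)))) card_ord.
have xr : (x <= r.+1)%N by apply: leq_trans hxr _.
rewrite [LHS](@big_cat_nat _ _ _ r.+1) //=.
rewrite [X in _ + X]big_nat_cond [X in _ + X]big1 ?addr0; last first.
  move=> i /andP[/andP[ri _] _]; rewrite big1 ?mulr0 // => j _.
  rewrite /g /gbin.
  have -> : (0 <= r%:Z - (i + j)%N%:Z) = false.
    by apply/negbTE; rewrite -ltNge subr_lt0 ltz_nat (leq_trans ri) ?leq_addr.
  by rewrite /= !mulr0.
apply: eq_bigr => i _; rewrite !natQ; congr (_ * _).
apply: eq_bigr => j _; rewrite addKn /g subnDA PoszD opprD addrA !natQ.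
by rewrite mulrCA mulrA.
Qed.

Definition frk (F : finFieldType) n m := #|[set C : 'M[F]_(n,m) | \rank C == m]|.

Lemma fiber (F : finFieldType) n k (V : 'M[F]_k) : <<V>>%MS == V ->
  #|[set M : 'M[F]_(n,k) | <<M>>%MS == V]| = frk F n (\rank V).
Proof.
move=> gV; set B := row_base V.
have [B' hB'] := row_freeP (row_base_free V).
have injB : injective (fun C : 'M[F]_(n, \rank V) => C *m B).
  by apply: (can_inj (g := fun M : 'M[F]_(n, k) => M *m B')) => u; rewrite /= -mulmxA hB' mulmx1.
rewrite /frk -(card_imset _ injB); apply: eq_card => M.
rewrite inE; apply/eqP/imsetP => [gM|[C]].
  have : (M <= B)%MS by rewrite eq_row_base -gM genmxE.
  case/submxP => D eM; exists D => //.
  by rewrite inE -(mxrankMfree _ (row_base_free V)) -eM -mxrank_gen gM.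
rewrite inE => /eqP rC ->; apply: (etrans _ (eqP gV)); apply/genmxP.
have sCV : (C *m B <= V)%MS by rewrite -(eq_row_base V) submxMl.
by rewrite -(mxrank_leqif_eq sCV).2 (mxrankMfree _ (row_base_free V)) rC.
Qed.

Lemma unit_rows_gen (F : fieldType) n k (M : 'M[F]_(n,k)) :
  unit_rows_in <<M>>%MS = unit_rows_in M.
Proof. by apply/setP => i; rewrite !inE genmxE. Qed.

Lemma mat_count (F : finFieldType) n k r (Q : pred {set 'I_k}) :
  #|[set M : 'M[F]_(n,k) | (\rank M == r) && Q (unit_rows_in M)]| =
  (#|[set V in subsp F k r | Q (unit_rows_in V)]| * frk F n r)%N.
Proof.
rewrite -sum_nat_const -sum1_card.
rewrite (partition_big (fun M : 'M[F]_(n,k) => <<M>>%MS)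
   (mem [set V in subsp F k r | Q (unit_rows_in V)])) /=; last first.
  move=> M; rewrite !inE genmx_id eqxx mxrank_gen unit_rows_gen /=.
  by case/andP => -> ->.
apply: eq_bigr => V; rewrite !inE => /andP[/andP[gV rV] QV].
rewrite -(eqP rV) -(fiber n gV) sum1_card; apply: eq_card => M.
rewrite unfold_in /= !inE.
case: (eqVneq <<M>>%MS V) => [eM|]; last by rewrite andbF.
by rewrite andbT -mxrank_gen -unit_rows_gen eM eqxx QV.
Qed.

Unset Implicit Arguments. Set Strict Implicit.

Theorem corollary1 (F : finFieldType) (n k r x : nat)
    (hxr : (x <= r)%N) (hrnk : (r <= minn n k)%N) :
  let q := #|F| in
  (#|[set M : 'M[F]_(n, k) | (\rank M == r) && (x <= #|unit_rows_in M|)%N]|%:Q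
     / #|[set M : 'M[F]_(n, k) | \rank M == r]|%:Q)
  = (gbin q k r)^-1 *
    \sum_(x <= i < r.+1)
      ('C(k, i)%:Q *
       \sum_(0 <= j < (k - i).+1)
         ((-1) ^+ j * 'C(k - i, j)%:Q
          * gbin q ((k - i - j)%:Z) (r%:Z - i%:Z - j%:Z))).
Proof.
move=> q; have rn : (r <= n)%N by move: hrnk; rewrite leq_min => /andP[].
have rk : (r <= k)%N by move: hrnk; rewrite leq_min => /andP[].
rewrite (@mat_count F n k r (fun U => (x <= #|U|)%N)).
have -> : [set M : 'M[F]_(n, k) | \rank M == r] =
          [set M : 'M[F]_(n, k) | (\rank M == r) && predT (unit_rows_in M)].
  by apply/setP => M; rewrite !inE andbT.
rewrite (@mat_count F n k r predT).
have fpos : (0 < frk F n r)%N.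
  apply/card_gt0P; exists (pid_mx r); rewrite inE rank_pid_mx //.
have hS : #|[set V in subsp F k r | predT (unit_rows_in V)]|%:Q = gbin q k r.
  have := @NU F k r set0 rk; rewrite cards0 subn0 subr0 => <-.
  suff -> : [set V in subsp F k r | predT (unit_rows_in V)] =
            [set V in subsp F k r | set0 \subset unit_rows_in V] by [].
  by apply/setP => V; rewrite !inE sub0set.
rewrite !natQ !natrM -!natQ hS subsp_count // mulrC.
have f0 : (frk F n r)%:~R != 0 :> rat by rewrite natQ pnatr_eq0 -lt0n.
by rewrite invfM -mulrA; congr (_ * _); rewrite mulrC mulfK.
Qed.
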